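(* Let $(V,\nu)$ be a strongly complete PN-space, $(W,\mu)$ a PN-space, and $(T_n)_{n\ge1}$ a sequence in $B(V,W)$ such that for every $x\in V$ the sequence $(T_nx)_{n\ge1}$ converges strongly in $W$. Define $T:V\to W$ by $Tx=\lim_{n\to\infty}T_nx$ (strong limit). Then $T$ is linear and $T\in B(V,W)$.
   Context: A distance distribution function is a map $F:[-\infty,+\infty]\to[0,1]$ that is nondecreasing, left-continuous on $\mathbb{R}$, with $F(-\infty)=0$, $F(+\infty)=1$ and $F(0)=0$; the set of these is $\Delta^+$. $\mathcal{D}^+\subseteq\Delta^+$ denotes the proper ones, i.e. those with $\lim_{x\to+\infty}F(x)=1$. $H_0\in\Delta^+$ is $H_0(x)=0$ for $x\le 0$ and $H_0(x)=1$ for $x>0$. For $F,G\in\Delta^+$ let $\tau_M(F,G)(x)=\sup\{\min(F(s),G(t)) : s+t=x\}$. In this paper a PN-space $(V,\nu)$ is a real vector space $V$ with a map $\nu:V\to\Delta^+$, $p\mapsto\nu_p$, such that for all $p,q\in V$: $\nu_p=H_0$ iff $p=0$; $\nu_{p+q}\ge\tau_M(\nu_p,\nu_q)$ pointwise; and $\nu_{\alpha p}(x)=\nu_p(x/|\alpha|)$ for all real $\alpha\neq0$ and $x\ge 0$. Standing assumption: $\nu_p\in\mathcal{D}^+$ for every $p\in V$. For $x\in V$ and $w\in(0,1)$ put $\|x\|_w=\sup\{t\in\mathbb{R}:\nu_x(t)<w\}$; for each $w$ this is a norm on $V$, and $w\mapsto\|x\|_w$ is nondecreasing. The strong topology on $V$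 is generated by the neighbourhoods $N_p(t)=\{q\in V:\nu_{p-q}(t)>1-t\}$, $p\in V$, $t>0$; equivalently the balls $\{x:\|x-p\|_w<r\}$ form a basis for it. A sequence $(p_n)$ converges strongly to $p$ if for every $t>0$ one has $p_n\in N_p(t)$ for all large $n$; it is strongly Cauchy if for every $t>0$ there is $N$ with $\nu_{p_n-p_m}(t)>1-t$ for all $m,n>N$. $(V,\nu)$ is strongly complete if every strongly Cauchy sequence converges strongly. $B(V,W)$ denotes the set of linear operators $V\to W$ that are continuous for the strong topologies. *)

(* Defs.v *)
From Stdlib Require Import Reals.
Open Scope R_scope.

Record RVS := {
  carrier :> Type;
  vadd : carrier -> carrier -> carrier;
  vzero : carrier;
  vopp : carrier -> carrier;
  vscal : R -> carrier -> carrier;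
  vadd_assoc : forall x y z, vadd x (vadd y z) = vadd (vadd x y) z;
  vadd_comm : forall x y, vadd x y = vadd y x;
  vadd_0 : forall x, vadd x vzero = x;
  vadd_opp : forall x, vadd x (vopp x) = vzero;
  vscal_1 : forall x, vscal 1 x = x;
  vscal_assoc : forall a b x, vscal a (vscal b x) = vscal (a * b) x;
  vscal_distr_v : forall a x y, vscal a (vadd x y) = vadd (vscal a x) (vscal a y);
  vscal_distr_s : forall a b x, vscal (a + b) x = vadd (vscal a x) (vscal b x)
}.

Arguments vadd {r}.
Arguments vzero {r}.
Arguments vopp {r}.
Arguments vscal {r}.

Definition vsub {V : RVS} (x y : V) : V := vadd x (vopp y).

(** A distance distribution function F in Delta^+, represented by its
    restriction to R (its values at -oo and +oo are forced to be 0 and 1). *)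
Definition is_ddf (F : R -> R) : Prop :=
  (forall x, 0 <= F x <= 1) /\
  (forall x y, x <= y -> F x <= F y) /\
  (forall x eps, 0 < eps -> exists d, 0 < d /\
      forall y, x - d < y < x -> Rabs (F y - F x) < eps) /\
  F 0 = 0.

Definition is_proper (F : R -> R) : Prop :=
  forall eps, 0 < eps -> exists M, forall x, M <= x -> Rabs (F x - 1) < eps.

Definition H0 (x : R) : R := if Rle_dec x 0 then 0 else 1.

(** PN-spaces (with the triangle function tau_M), under the standing
    assumption that every nu_p is proper.  The triangle axiom
    nu_{p+q} >= tau_M(nu_p, nu_q) is written out pointwise: it says that
    nu_{p+q}(x) bounds every min(nu_p(s), nu_q(t)) with s + t = x. *)
Record PNSpace := {
  pn_vs :> RVS;
  nu : pn_vs -> R -> R;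
  nu_ddf : forall p, is_ddf (nu p);
  nu_proper : forall p, is_proper (nu p);
  nu_H0 : forall p, (forall x, nu p x = H0 x) <-> p = vzero;
  nu_tri : forall p q x s t, s + t = x ->
      Rmin (nu p s) (nu q t) <= nu (vadd p q) x;
  nu_scal : forall p a x, a <> 0 -> 0 <= x -> nu (vscal a p) x = nu p (x / Rabs a)
}.

Arguments nu {p0} p x : rename.

Definition Nbhd {V : PNSpace} (p : V) (t : R) (q : V) : Prop :=
  nu (vsub p q) t > 1 - t.

Definition strong_conv {V : PNSpace} (u : nat -> V) (p : V) : Prop :=
  forall t, 0 < t -> exists N, forall n, (N <= n)%nat -> Nbhd p t (u n).

Definition strong_cauchy {V : PNSpace} (u : nat -> V) : Prop :=
  forall t, 0 < t -> exists N, forall m n, (N < m)%nat -> (N < n)%nat ->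
    nu (vsub (u n) (u m)) t > 1 - t.

Definition strongly_complete (V : PNSpace) : Prop :=
  forall u : nat -> V, strong_cauchy u -> exists p, strong_conv u p.

Definition linear_op {V W : PNSpace} (f : V -> W) : Prop :=
  (forall x y, f (vadd x y) = vadd (f x) (f y)) /\
  (forall a x, f (vscal a x) = vscal a (f x)).

(** Continuity for the strong topologies (the N_p(t) form neighbourhood bases). *)
Definition strong_continuous {V W : PNSpace} (f : V -> W) : Prop :=
  forall p t, 0 < t -> exists s, 0 < s /\
    forall q, Nbhd p s q -> Nbhd (f p) t (f q).

Definition in_B {V W : PNSpace} (f : V -> W) : Prop :=
  linear_op f /\ strong_continuous f.

(* Main.v *)
Require Import Defs.
From Stdlib Require Import Reals Lra Lia ZArith Classical ClassicalEpsilon.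
Open Scope R_scope.

Section Vec.
Variable V : RVS.
Implicit Types x y z a b u v p q : V.

Lemma vadd_0l x : vadd vzero x = x.
Proof. rewrite vadd_comm; apply vadd_0. Qed.

Lemma vopp_l x : vadd (vopp x) x = vzero.
Proof. rewrite vadd_comm; apply vadd_opp. Qed.

Lemma idem0 a : vadd a a = a -> a = vzero.
Proof.
  intro H. transitivity (vadd (vadd a a) (vopp a)).
  - rewrite <- vadd_assoc, vadd_opp, vadd_0. reflexivity.
  - rewrite H. apply vadd_opp.
Qed.

Lemma vscal0 x : vscal 0 x = vzero.
Proof.
  apply idem0. rewrite <- vscal_distr_s, Rplus_0_r. reflexivity.
Qed.

Lemma vscal_zero (c : R) : vscal c (@vzero V) = vzero.
Proof.
  apply idem0. rewrite <- vscal_distr_v, vadd_0. reflexivity.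
Qed.

Lemma opp_unique x y : vadd x y = vzero -> y = vopp x.
Proof.
  intro H. rewrite <- (vadd_0 _ y), <- (vadd_opp _ x), vadd_assoc,
    (vadd_comm _ y x), H, vadd_0l. reflexivity.
Qed.

Lemma vopp_scal x : vopp x = vscal (-1) x.
Proof.
  symmetry. apply opp_unique.
  rewrite <- (vscal_1 _ x) at 1. rewrite <- vscal_distr_s.
  replace (1 + -1) with 0 by ring. apply vscal0.
Qed.

Lemma add_sub a b : vsub (vadd a b) a = b.
Proof.
  unfold vsub. rewrite (vadd_comm _ a b), <- vadd_assoc, vadd_opp, vadd_0. reflexivity.
Qed.

Lemma sub_add u v : vadd (vsub u v) v = u.
Proof.
  unfold vsub. rewrite <- vadd_assoc, vopp_l, vadd_0. reflexivity.
Qed.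

Lemma vsub_opp x y : vsub y x = vopp (vsub x y).
Proof.
  apply opp_unique. unfold vsub.
  rewrite <- vadd_assoc, (vadd_assoc _ (vopp y) y), vopp_l, vadd_0l, vadd_opp.
  reflexivity.
Qed.

Lemma vsub_split x y z : vsub x z = vadd (vsub x y) (vsub y z).
Proof.
  unfold vsub. rewrite <- vadd_assoc, (vadd_assoc _ (vopp y) y), vopp_l, vadd_0l.
  reflexivity.
Qed.

Lemma vopp_add u v : vopp (vadd u v) = vadd (vopp u) (vopp v).
Proof. rewrite !vopp_scal. apply vscal_distr_v. Qed.

Lemma vsub_add p q u v : vsub (vadd p q) (vadd u v) = vadd (vsub p u) (vsub q v).
Proof.
  unfold vsub. rewrite vopp_add, !vadd_assoc. f_equal.
  rewrite <- !vadd_assoc. f_equal. apply vadd_comm.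
Qed.

Lemma vsub_scal (c : R) p u : vsub (vscal c p) (vscal c u) = vscal c (vsub p u).
Proof.
  unfold vsub. rewrite vscal_distr_v, !vopp_scal, !vscal_assoc.
  rewrite Rmult_comm. reflexivity.
Qed.

Lemma vsub_self x : vsub x x = vzero.
Proof. apply vadd_opp. Qed.

End Vec.

Lemma lin_zero (V W : PNSpace) (f : V -> W) : linear_op f -> f vzero = vzero.
Proof.
  intros [Ha Hs]. rewrite <- (vscal0 _ vzero), Hs. apply vscal0.
Qed.

Lemma lin_sub (V W : PNSpace) (f : V -> W) x y : linear_op f ->
  f (vsub x y) = vsub (f x) (f y).
Proof.
  intros [Ha Hs]. unfold vsub. rewrite Ha, !vopp_scal, Hs. reflexivity.
Qed.

Section PN.
Variable V : PNSpace.
Implicit Types p q : V.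

Lemma nu_bounds p (x : R) : 0 <= nu p x <= 1.
Proof. destruct (nu_ddf V p) as [H _]. apply H. Qed.

Lemma nu_mono p (x y : R) : x <= y -> nu p x <= nu p y.
Proof. destruct (nu_ddf V p) as [_ [H _]]. apply H. Qed.

Lemma nu_neg p (x : R) : x <= 0 -> nu p x = 0.
Proof.
  intro Hx. destruct (nu_ddf V p) as [_ [_ [_ H0']]].
  pose proof (nu_mono p x 0 Hx). pose proof (nu_bounds p x). lra.
Qed.

Lemma nu_zero_vec (x : R) : 0 < x -> nu (@vzero V) x = 1.
Proof.
  intro Hx. rewrite (proj2 (nu_H0 V vzero) eq_refl x). unfold H0.
  destruct (Rle_dec x 0); lra.
Qed.

Lemma nu_opp p (x : R) : nu (vopp p) x = nu p x.
Proof.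
  destruct (Rle_dec x 0) as [Hx|Hx].
  - rewrite !nu_neg; auto.
  - rewrite vopp_scal, nu_scal by lra.
    assert (Rabs (-1) = 1) by (unfold Rabs; destruct Rcase_abs; lra).
    rewrite H. f_equal. field.
Qed.

Lemma nu_sym (x y : V) t : nu (vsub x y) t = nu (vsub y x) t.
Proof. rewrite (vsub_opp _ x y), nu_opp. reflexivity. Qed.

Lemma nu_tri' p q s t : Rmin (nu p s) (nu q t) <= nu (vadd p q) (s + t).
Proof. apply nu_tri; reflexivity. Qed.

Lemma nbhd_pos (x : V) r y : Nbhd x r y -> 0 < r.
Proof. unfold Nbhd. pose proof (nu_bounds (vsub x y) r). lra. Qed.

Lemma nbhd_refl (x : V) r : 0 < r -> Nbhd x r x.
Proof. intro. unfold Nbhd. rewrite vsub_self, nu_zero_vec; lra. Qed.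

Lemma nbhd_sym (x : V) r y : Nbhd x r y -> Nbhd y r x.
Proof. unfold Nbhd. rewrite nu_sym. auto. Qed.

Lemma nbhd_mono (x : V) r r' y : Nbhd x r y -> r <= r' -> Nbhd x r' y.
Proof.
  unfold Nbhd. intros H Hr. pose proof (nu_mono (vsub x y) r r' Hr). lra.
Qed.

Lemma nbhd_tri (x y z : V) r1 r2 : Nbhd x r1 y -> Nbhd y r2 z -> Nbhd x (r1 + r2) z.
Proof.
  intros H1 H2. pose proof (nbhd_pos _ _ _ H1). pose proof (nbhd_pos _ _ _ H2).
  unfold Nbhd in *. rewrite (vsub_split _ x y z).
  pose proof (nu_tri' (vsub x y) (vsub y z) r1 r2).
  assert (1 - (r1 + r2) < Rmin (nu (vsub x y) r1) (nu (vsub y z) r2)).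
  { apply Rmin_glb_lt; lra. }
  lra.
Qed.

Lemma nu_eq_H0 p : (forall t, 0 < t -> nu p t > 1 - t) -> p = vzero.
Proof.
  intro H. apply (nu_H0 V p). intro x. unfold H0.
  destruct (Rle_dec x 0) as [Hx|Hx].
  - apply nu_neg; auto.
  - pose proof (nu_bounds p x).
    destruct (Rle_lt_dec 1 (nu p x)); [lra|].
    set (t := Rmin x (1 - nu p x)).
    assert (0 < t) by (apply Rmin_glb_lt; lra).
    pose proof (H t H1).
    pose proof (nu_mono p t x (Rmin_l _ _)).
    pose proof (Rmin_r x (1 - nu p x)). fold t in H4. lra.
Qed.

Lemma conv_unique (u : nat -> V) p q : strong_conv u p -> strong_conv u q -> p = q.
Proof.
  intros Hp Hq.
  assert (vsub p q = vzero).
  { apply nu_eq_H0. intros t Ht.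
    destruct (Hp (t/2)) as [N1 H1]; [lra|]. destruct (Hq (t/2)) as [N2 H2]; [lra|].
    specialize (H1 (max N1 N2) ltac:(lia)). specialize (H2 (max N1 N2) ltac:(lia)).
    apply nbhd_sym in H2.
    pose proof (nbhd_tri _ _ _ _ _ H1 H2).
    replace (t/2 + t/2) with t in H by field. exact H. }
  rewrite <- (sub_add _ p q), H, vadd_0l. reflexivity.
Qed.

Lemma conv_ext (u v : nat -> V) p : (forall n, u n = v n) -> strong_conv u p -> strong_conv v p.
Proof.
  intros He H t Ht. destruct (H t Ht) as [N HN]. exists N. intros n Hn.
  rewrite <- He. auto.
Qed.

Lemma conv_add (u v : nat -> V) p q : strong_conv u p -> strong_conv v q ->
  strong_conv (fun n => vadd (u n) (v n)) (vadd p q).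
Proof.
  intros Hu Hv t Ht.
  destruct (Hu (t/2)) as [N1 H1]; [lra|]. destruct (Hv (t/2)) as [N2 H2]; [lra|].
  exists (max N1 N2). intros n Hn.
  specialize (H1 n ltac:(lia)). specialize (H2 n ltac:(lia)).
  unfold Nbhd in *. rewrite vsub_add.
  pose proof (nu_tri' (vsub p (u n)) (vsub q (v n)) (t/2) (t/2)).
  replace (t/2 + t/2) with t in H by field.
  assert (1 - t < Rmin (nu (vsub p (u n)) (t / 2)) (nu (vsub q (v n)) (t / 2))).
  { apply Rmin_glb_lt; lra. }
  lra.
Qed.

Lemma conv_scal (u : nat -> V) p c : strong_conv u p ->
  strong_conv (fun n => vscal c (u n)) (vscal c p).
Proof.
  intros Hu t Ht.
  destruct (Req_dec c 0) as [Hc|Hc].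
  - exists 0%nat. intros n _. unfold Nbhd. rewrite vsub_scal, Hc, vscal0, nu_zero_vec; lra.
  - set (t' := Rmin t (t / Rabs c)).
    assert (Hca : 0 < Rabs c) by (apply Rabs_pos_lt; auto).
    assert (0 < t') by (apply Rmin_glb_lt; [lra| apply Rdiv_lt_0_compat; lra]).
    destruct (Hu t' H) as [N HN]. exists N. intros n Hn.
    specialize (HN n Hn). unfold Nbhd in *.
    rewrite vsub_scal, nu_scal by (auto; lra).
    pose proof (nu_mono (vsub p (u n)) t' (t / Rabs c) (Rmin_r _ _)).
    pose proof (Rmin_l t (t / Rabs c)). fold t' in H1. lra.
Qed.

End PN.

Lemma arch (X e : R) : 0 < e -> exists k : nat, X <= INR k * e.
Proof.
  intro He. destruct (archimed (X / e)) as [H1 _].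
  exists (Z.to_nat (up (X / e))).
  destruct (Z_lt_le_dec (up (X / e)) 0) as [Hz|Hz].
  - assert (X / e < 0).
    { apply IZR_lt in Hz. lra. }
    assert (X < 0).
    { apply Rmult_lt_reg_r with (/ e). apply Rinv_0_lt_compat; auto.
      rewrite Rmult_0_l. exact H. }
    pose proof (pos_INR (Z.to_nat (up (X / e)))). nra.
  - rewrite INR_IZR_INZ, Z2Nat.id by auto.
    assert (X = X / e * e) by (field; lra). rewrite H at 1.
    apply Rmult_le_compat_r; lra.
Qed.

Lemma finite_bound (f : nat -> R -> R) (e : R) (N : nat) :
  (forall n, is_proper (f n)) -> 0 < e ->
  exists M, forall n x, (n < N)%nat -> M <= x -> f n x > 1 - e.
Proof.
  intros Hp He. induction N as [|N IH].
  - exists 0. intros; lia.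
  - destruct IH as [M HM]. destruct (Hp N e He) as [M2 HM2].
    exists (Rmax M M2). intros n x Hn Hx.
    destruct (Nat.eq_dec n N) as [->|Hne].
    + specialize (HM2 x ltac:(pose proof (Rmax_r M M2); lra)).
      apply Rabs_def2 in HM2. lra.
    + apply HM; [lia|]. pose proof (Rmax_l M M2); lra.
Qed.

Section Baire.
Variable V : PNSpace.
Variable E : nat -> V -> Prop.
Hypothesis Hcomp : strongly_complete V.
Hypothesis Hcover : forall z, exists k, E k z.
Hypothesis Hopen : forall k z, ~ E k z -> exists r, 0 < r /\ forall z', Nbhd z r z' -> ~ E k z'.

Definition spec k (xr p : V * R) : Prop :=
  0 < snd p /\ snd p <= snd xr / 4 /\ snd p <= / (INR k + 2) /\
  Nbhd (fst xr) (snd xr / 2) (fst p) /\ forall z, Nbhd (fst p) (snd p) z -> ~ E k z.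

Lemma baire : exists k x0 r, 0 < r /\ forall z, Nbhd x0 r z -> E k z.
Proof.
  apply NNPP. intro NH.
  assert (H : forall k x r, 0 < r -> exists z, Nbhd x r z /\ ~ E k z).
  { intros k x r Hr. apply NNPP. intro C. apply NH. exists k, x, r. split; auto.
    intros z Hz. apply NNPP. intro C2. apply C. exists z. auto. }
  assert (step : forall k (xr : V * R), exists p, 0 < snd xr -> spec k xr p).
  { intros k [x r]. destruct (Rlt_dec 0 r) as [Hr|Hr].
    - destruct (H k x (r/2)) as [z [Hz HE]]; [lra|].
      destruct (Hopen k z HE) as [rho [Hrho Hb]].
      pose proof (pos_INR k).
      assert (Hk : 0 < / (INR k + 2)) by (apply Rinv_0_lt_compat; lra).
      exists (z, Rmin rho (Rmin (r/4) (/ (INR k + 2)))). intros _.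
      unfold spec; simpl. repeat split.
      + apply Rmin_glb_lt; [lra|]. apply Rmin_glb_lt; lra.
      + eapply Rle_trans; [apply Rmin_r|apply Rmin_l].
      + eapply Rle_trans; [apply Rmin_r|apply Rmin_r].
      + exact Hz.
      + intros z' Hz'. apply Hb. eapply nbhd_mono; [exact Hz'|apply Rmin_l].
    - exists (x, r). intro Hc; simpl in Hc; lra. }
  pose (g := fun k xr => proj1_sig (constructive_indefinite_description _ (step k xr))).
  assert (Hg : forall k xr, 0 < snd xr -> spec k xr (g k xr)).
  { intros k xr. exact (proj2_sig (constructive_indefinite_description _ (step k xr))). }
  pose (s := fix s (k : nat) : V * R := match k with O => (vzero, 1) | S k => g k (s k) end).
  assert (Hs : forall k, s (S k) = g k (s k)) by reflexivity.
  assert (Hpos : forall k, 0 < snd (s k)).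
  { induction k. simpl; lra. rewrite Hs. apply (Hg k _ IHk). }
  assert (Hsp : forall k, spec k (s k) (s (S k))).
  { intro k. rewrite Hs. apply Hg, Hpos. }
  set (x := fun k => fst (s k)). set (r := fun k => snd (s k)).
  assert (Rdec : forall k, r (S k) <= r k / 4) by (intro k; apply (Hsp k)).
  assert (Rpos : forall k, 0 < r k) by (intro k; apply Hpos).
  assert (Rbd : forall k, r k <= / (INR k + 1)).
  { intro k. destruct k.
    - unfold r; simpl. lra.
    - rewrite S_INR. replace (INR k + 1 + 1) with (INR k + 2) by ring. apply (Hsp k). }
  assert (Dstep : forall k, Nbhd (x k) (r k / 2) (x (S k))) by (intro k; apply (Hsp k)).
  assert (Claim1 : forall k j, Nbhd (x k) (r k - 2/3 * r (k + j)%nat) (x (k + j)%nat)).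
  { intros k j. induction j.
    - rewrite Nat.add_0_r. apply nbhd_refl. pose proof (Rpos k); lra.
    - rewrite Nat.add_succ_r. eapply nbhd_mono.
      + eapply nbhd_tri; [exact IHj| apply Dstep].
      + pose proof (Rdec (k + j)%nat). lra. }
  assert (Claim2 : forall k j, Nbhd (x k) (3/4 * r k) (x (k + j)%nat)).
  { intros k j. destruct j.
    - rewrite Nat.add_0_r. apply nbhd_refl. pose proof (Rpos k); lra.
    - replace (k + S j)%nat with (S k + j)%nat by lia. eapply nbhd_mono.
      + eapply nbhd_tri; [apply Dstep| apply (Claim1 (S k) j)].
      + pose proof (Rdec k). pose proof (Rpos (S k + j)%nat). lra. }
  assert (Hc : strong_cauchy x).
  { intros t Ht. destruct (arch (2 / t) 1) as [N HN]; [lra|].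
    exists N. intros m n Hm Hn.
    assert (HrN : r N <= t / 2).
    { eapply Rle_trans; [apply Rbd|].
      pose proof (pos_INR N).
      assert (2 / t < INR N + 1) by lra.
      assert (0 < 2 / t) by (apply Rdiv_lt_0_compat; lra).
      apply Rlt_le. replace (t / 2) with (/ (2 / t)) by (field; lra).
      apply Rinv_lt_contravar; nra. }
    pose proof (Claim2 N (m - N)%nat) as A. pose proof (Claim2 N (n - N)%nat) as B.
    replace (N + (m - N))%nat with m in A by lia.
    replace (N + (n - N))%nat with n in B by lia.
    apply nbhd_sym in B. pose proof (nbhd_tri V _ _ _ _ _ B A) as C.
    apply (nbhd_mono V _ _ _ _ C). lra. }
  destruct (Hcomp x Hc) as [xs Hxs].
  destruct (Hcover xs) as [k Hk].
  destruct (Hsp k) as [_ [_ [_ [_ Hball]]]].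
  apply (Hball xs); [|exact Hk].
  change (Nbhd (x (S k)) (r (S k)) xs).
  destruct (Hxs (r (S k) / 4)) as [N HN]; [pose proof (Rpos (S k)); lra|].
  specialize (HN (S k + N)%nat ltac:(lia)). apply nbhd_sym in HN.
  pose proof (nbhd_tri V _ _ _ _ _ (Claim2 (S k) N) HN) as C.
  apply (nbhd_mono V _ _ _ _ C). lra.
Qed.

End Baire.

Theorem theorem4p12 (V W : PNSpace) (Tn : nat -> V -> W) (T : V -> W) :
  strongly_complete V ->
  (forall n, in_B (Tn n)) ->
  (forall x, exists y, strong_conv (fun n => Tn n x) y) ->
  (forall x, strong_conv (fun n => Tn n x) (T x)) ->
  linear_op T /\ in_B T.
Proof.
  intros Hcomp HB _ HT.
  assert (Hlin : linear_op T).
  { split.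
    - intros x y. apply (conv_unique W (fun n => Tn n (vadd x y))); [apply HT|].
      apply (conv_ext W (fun n => vadd (Tn n x) (Tn n y))).
      + intro n. symmetry. apply (proj1 (proj1 (HB n))).
      + apply conv_add; apply HT.
    - intros a x. apply (conv_unique W (fun n => Tn n (vscal a x))); [apply HT|].
      apply (conv_ext W (fun n => vscal a (Tn n x))).
      + intro n. symmetry. apply (proj2 (proj1 (HB n))).
      + apply conv_scal; apply HT. }
  split; [exact Hlin|]. split; [exact Hlin|].
  assert (C0 : forall t, 0 < t -> exists s, 0 < s /\
             forall z, nu z s > 1 - s -> nu (T z) t > 1 - t).
  { intros t Ht. set (e := t / 2). assert (He : 0 < e) by (unfold e; lra).
    set (E := fun (k : nat) (z : V) => forall n a, INR k * e < a -> nu (Tn n z) a >= 1 - e).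
    assert (Hcover : forall z, exists k, E k z).
    { intro z. set (y := T z).
      destruct (HT z e He) as [N HN].
      destruct (nu_proper W y e He) as [M1 HM1].
      destruct (finite_bound (fun n => nu (Tn n z)) e N (fun n => nu_proper W (Tn n z)) He)
        as [M2 HM2].
      destruct (arch (Rmax (M1 + e) M2) e He) as [k Hk].
      exists k. intros n a Ha.
      pose proof (Rmax_l (M1 + e) M2). pose proof (Rmax_r (M1 + e) M2).
      destruct (lt_dec n N) as [Hn|Hn].
      + apply Rle_ge, Rlt_le. apply (HM2 n a Hn). lra.
      + specialize (HN n ltac:(lia)). unfold Nbhd in HN.
        rewrite <- (sub_add _ (Tn n z) y).
        replace a with (e + (a - e)) by ring.
        pose proof (nu_tri' W (vsub (Tn n z) y) y e (a - e)).
        rewrite nu_sym in H1.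
        specialize (HM1 (a - e) ltac:(lra)). apply Rabs_def2 in HM1.
        assert (1 - e < Rmin (nu (vsub y (Tn n z)) e) (nu y (a - e))).
        { apply Rmin_glb_lt; fold y in HN; lra. }
        lra. }
    assert (Hopen : forall k z, ~ E k z -> exists r, 0 < r /\ forall z', Nbhd z r z' -> ~ E k z').
    { intros k z HE.
      assert (exists n a, INR k * e < a /\ nu (Tn n z) a < 1 - e) as [n [a [Ha Hna]]].
      { apply NNPP. intro C. apply HE. intros n a Ha. apply NNPP. intro C2.
        apply C. exists n, a. split; auto. lra. }
      set (d := Rmin ((a - INR k * e) / 2) e).
      assert (Hd : 0 < d) by (apply Rmin_glb_lt; lra).
      destruct (proj2 (HB n) z d Hd) as [s [Hs Hcont]].
      exists s. split; auto. intros z' Hz' HE'.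
      specialize (Hcont z' Hz'). unfold Nbhd in Hcont.
      assert (Hd1 : d <= (a - INR k * e) / 2) by apply Rmin_l.
      assert (Hd2 : d <= e) by apply Rmin_r.
      specialize (HE' n (a - d) ltac:(lra)).
      pose proof (nu_tri' W (vsub (Tn n z) (Tn n z')) (Tn n z') d (a - d)).
      rewrite sub_add in H. replace (d + (a - d)) with a in H by ring.
      assert (1 - e <= Rmin (nu (vsub (Tn n z) (Tn n z')) d) (nu (Tn n z') (a - d))).
      { unfold Rmin. destruct Rle_dec; lra. }
      lra. }
    destruct (baire V E Hcomp Hcover Hopen) as [k [x0 [r [Hr Hball]]]].
    pose proof (pos_INR k).
    set (c := 2 * INR k + 1). assert (Hc : 1 <= c) by (unfold c; lra).
    exists (r / c). split; [apply Rdiv_lt_0_compat; lra|].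
    intros z Hz.
    set (w := vscal c z).
    assert (Hw : nu w r > 1 - r).
    { unfold w. rewrite nu_scal by lra. rewrite Rabs_right by lra.
      assert (r / c <= r).
      { unfold Rdiv. rewrite <- (Rmult_1_r r) at 2. apply Rmult_le_compat_l; [lra|].
        rewrite <- Rinv_1. apply Rinv_le_contravar; lra. }
      lra. }
    assert (E1 : E k (vadd x0 w)).
    { apply Hball. unfold Nbhd. rewrite nu_sym, add_sub. exact Hw. }
    assert (E0 : E k x0).
    { apply Hball. apply nbhd_refl; auto. }
    assert (Hn : forall n, nu (Tn n z) e >= 1 - e).
    { intro n.
      assert (Hw' : Tn n w = vsub (Tn n (vadd x0 w)) (Tn n x0)).
      { rewrite (proj1 (proj1 (HB n))). symmetry. apply add_sub. }
      assert (Hb : forall b, 2 * INR k * e < b -> nu (Tn n w) b >= 1 - e).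
      { intros b Hb. rewrite Hw'. unfold vsub.
        pose proof (nu_tri' W (Tn n (vadd x0 w)) (vopp (Tn n x0)) (b/2) (b/2)).
        replace (b/2 + b/2) with b in H0 by field.
        rewrite nu_opp in H0.
        specialize (E1 n (b/2) ltac:(lra)). specialize (E0 n (b/2) ltac:(lra)).
        assert (1 - e <= Rmin (nu (Tn n (vadd x0 w)) (b / 2)) (nu (Tn n x0) (b / 2))).
        { unfold Rmin. destruct Rle_dec; lra. }
        lra. }
      specialize (Hb (c * e) ltac:(unfold c; nra)).
      unfold w in Hb. rewrite (proj2 (proj1 (HB n))) in Hb.
      rewrite nu_scal in Hb by nra. rewrite Rabs_right in Hb by lra.
      replace (c * e / c) with e in Hb by (field; lra). exact Hb. }
    destruct (HT z e He) as [N HN]. specialize (HN N (le_n N)). unfold Nbhd in HN.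
    pose proof (nu_tri' W (vsub (T z) (Tn N z)) (Tn N z) e e).
    rewrite sub_add in H0. replace (e + e) with t in H0 by (unfold e; field).
    specialize (Hn N).
    assert (1 - e <= Rmin (nu (vsub (T z) (Tn N z)) e) (nu (Tn N z) e)).
    { unfold Rmin. destruct Rle_dec; lra. }
    unfold e in *; lra. }
  intros p t Ht. destruct (C0 t Ht) as [s [Hs Hz]]. exists s. split; auto.
  intros q Hq. unfold Nbhd in *. rewrite <- (lin_sub V W T p q Hlin). apply Hz. exact Hq.
Qed.
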